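(* There exists an amicable orthogonal design $AOD\big(2^9;\ 2^6_{(8)};\ 2^6_{(8)}\big)$, i.e. a pair $(C;D)$ of $2^9\times2^9$ matrices, $C$ with entries in $\{0,\pm x_1,\ldots,\pm x_8\}$ and $D$ with entries in $\{0,\pm y_1,\ldots,\pm y_8\}$, such that $CC^{\rm T}=\big(2^6\sum_{i=1}^8x_i^2\big)I_{2^9}$, $DD^{\rm T}=\big(2^6\sum_{i=1}^8y_i^2\big)I_{2^9}$ and $CD^{\rm T}=DC^{\rm T}$.
   Context: The notation $u_{(k)}$ in a type means that $u$ is repeated $k$ times. $x_1,\ldots,x_8,y_1,\ldots,y_8$ are sixteen distinct commuting indeterminates. An amicable orthogonal design $AOD(m;c_1,\ldots,c_k;d_1,\ldots,d_\ell)$ is a pair $(X;Y)$ of $m\times m$ matrices with $X$ having entries in $\{0,\pm x_1,\ldots,\pm x_k\}$, $Y$ having entries in $\{0,\pm y_1,\ldots,\pm y_\ell\}$, $XX^{\rm T}=(\sum c_ix_i^2)I_m$, $YY^{\rm T}=(\sum d_iy_i^2)I_m$, and $XY^{\rm T}=YX^{\rm T}$. *)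

(* Defs.v *)
From HB Require Import structures.
From mathcomp Require Import all_boot all_order all_algebra.
Set Implicit Arguments. Unset Strict Implicit. Unset Printing Implicit Defensive.
Import GRing.Theory.
Local Open Scope ring_scope.

(* A formal entry of a design with variables x_1..x_k:
   None = 0,  Some (b, i) = (-1)^b * x_i. *)
Definition sentry (k : nat) := option (bool * 'I_k)%type.

Definition ev_entry (R : pzRingType) (k : nat) (x : 'I_k -> R) (e : sentry k) : R :=
  match e with
  | None => 0
  | Some (b, i) => (-1) ^+ b * x i
  end.

Definition ev_mx (R : pzRingType) (k m : nat) (x : 'I_k -> R) (A : 'M[sentry k]_m)
  : 'M[R]_m := map_mx (ev_entry x) A.

(* The matrix identities are required
   as polynomial identities in the commuting indeterminates x_i, y_j; this is
   expressed as: they hold after substituting arbitrary values from an arbitrary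
   commutative ring (taking the polynomial ring itself recovers the identity). *)
Definition AOD (m k l : nat) (c : 'I_k -> nat) (d : 'I_l -> nat)
  (X : 'M[sentry k]_m) (Y : 'M[sentry l]_m) : Prop :=
  forall (R : comNzRingType) (x : 'I_k -> R) (y : 'I_l -> R),
    let Xe := ev_mx x X in
    let Ye := ev_mx y Y in
    [/\ Xe *m Xe^T = (\sum_(i < k) (c i)%:R * x i ^+ 2)%:M,
        Ye *m Ye^T = (\sum_(j < l) (d j)%:R * y j ^+ 2)%:M
      & Xe *m Ye^T = Ye *m Xe^T].

(* Main.v *)
Require Import Defs.
From HB Require Import structures.
From mathcomp Require Import all_boot all_order all_algebra.
From mathcomp.real_closed Require Import mxtens.
From mathcomp Require Import ring.
Set Implicit Arguments. Unset Strict Implicit. Unset Printing Implicit Defensive.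
Import GRing.Theory.
Local Open Scope ring_scope.



Definition e (t i j : nat) : int :=
  match t, i, j with
  | 0, 0, 0 => 1 | 0, 1, 1 => 1
  | 1, 0, 0 => 1 | 1, 1, 1 => -1
  | 2, 0, 1 => 1 | 2, 1, 0 => 1
  | 3, 0, 1 => 1 | 3, 1, 0 => -1
  | 4, 1, 1 => -1 | 4, _, _ => 1
  | 5, 1, 0 => -1 | 5, _, _ => 1
  | 6, 0, 1 => -1 | 6, _, _ => 1
  | 7, 0, 0 => -1 | 7, _, _ => 1
  | _, _, _ => 0
  end.

Definition idx2 := [:: (0,0); (0,1); (1,0); (1,1)]%N.

Definition relcheck t u (b : bool) :=
  all (fun ij => (e t ij.2 0 * e u ij.1 0 + e t ij.2 1 * e u ij.1 1) ==
     (-1) ^+ b * (e t ij.1 0 * e u ij.2 0 + e t ij.1 1 * e u ij.2 1)) idx2.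

Definition relt t u : option bool :=
  if relcheck t u false then Some false else if relcheck t u true then Some true else None.


Definition T t : 'M[int]_2 := \matrix_(i < 2, j < 2) e t i j.

Lemma sum2 (F : 'I_2 -> int) : \sum_(k < 2) F k = F ord0 + F (@Ordinal 2 1 isT).
Proof. rewrite big_ord_recl big_ord1; congr (_ + F _); exact: val_inj. Qed.

Lemma ord2E (P : 'I_2 -> Prop) : P ord0 -> P (@Ordinal 2 1 isT) -> forall i, P i.
Proof.
move=> h0 h1 [[|[|//]] Hi].
  by rewrite (_ : Ordinal Hi = ord0) //; apply: val_inj.
by rewrite (_ : Ordinal Hi = Ordinal (isT : (1 < 2)%N)) //; apply: val_inj.
Qed.

Lemma relcheckP t u b : relcheck t u b ->
  (T t *m (T u)^T)^T = (-1) ^+ b *: (T t *m (T u)^T).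
Proof.
rewrite /relcheck /= => /and5P [/eqP h00 /eqP h01 /eqP h10 /eqP h11 _].
apply/matrixP; apply: ord2E; apply: ord2E;
  by rewrite !mxE !sum2 !mxE /=.
Qed.

Lemma relP t u b : relt t u = Some b -> (T t *m (T u)^T)^T = (-1) ^+ b *: (T t *m (T u)^T).
Proof.
rewrite /relt; case: ifP => h1; first by case=> <-; apply: relcheckP.
by case: ifP => h2 // [<-]; apply: relcheckP.
Qed.

Definition diagcheck t (c : int) :=
  all (fun ij => (e t ij.1 0 * e t ij.2 0 + e t ij.1 1 * e t ij.2 1) ==
     (if ij.1 == ij.2 then c else 0)) idx2.

Lemma diagP t c : diagcheck t c -> T t *m (T t)^T = c%:M.
Proof.
rewrite /diagcheck /= => /and5P [/eqP h00 /eqP h01 /eqP h10 /eqP h11 _].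
apply/matrixP; apply: ord2E; apply: ord2E;
  by rewrite !mxE !sum2 !mxE /=.
Qed.

Definition u01 (x : int) := (x == 0) || (x == 1) || (x == -1).

Definition entcheck t := all (fun ij => u01 (e t ij.1 ij.2)) idx2.

Lemma entP t : entcheck t -> forall i j, u01 (T t i j).
Proof.
rewrite /entcheck /= => /and5P [h00 h01 h10 h11 _].
apply: ord2E; apply: ord2E; by rewrite !mxE.
Qed.

Definition dischk t u := all (fun ij => e t ij.1 ij.2 * e u ij.1 ij.2 == 0) idx2.

Lemma disP t u : dischk t u -> forall i j, T t i j * T u i j = 0.
Proof.
rewrite /dischk /= => /and5P [/eqP h00 /eqP h01 /eqP h10 /eqP h11 _].
apply: ord2E; apply: ord2E; by rewrite !mxE.
Qed.



Fixpoint pw n : nat := if n is n'.+1 then (2 * pw n')%N else 1%N.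

Fixpoint tens (f : nat -> 'M[int]_2) n : 'M[int]_(pw n) :=
  match n return 'M[int]_(pw n) with
  | 0 => 1%:M
  | n'.+1 => tensmx (f n') (tens f n')
  end.

Lemma tens_mulT f g n :
  tens f n *m (tens g n)^T = tens (fun p => f p *m (g p)^T) n.
Proof.
elim: n => [|n IH] /=; first by rewrite tr_scalar_mx mul_scalar_mx scale1r.
by rewrite trmx_tens tensmx_mul IH.
Qed.

Lemma tensmxZZ m p (a b : int) (M : 'M[int]_m) (N : 'M[int]_p) :
  tensmx (a *: M) (b *: N) = (a * b) *: tensmx M N.
Proof. apply/matrixP => i j; rewrite !mxE; ring. Qed.

Fixpoint par (s : nat -> bool) n : bool :=
  if n is n'.+1 then s n' (+) par s n' else false.

Lemma tens_sym (h : nat -> 'M[int]_2) (s : nat -> bool) n :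
  (forall p, (p < n)%N -> (h p)^T = (-1) ^+ s p *: h p) ->
  (tens h n)^T = (-1) ^+ par s n *: tens h n.
Proof.
elim: n => [|n IH] H /=; first by rewrite tr_scalar_mx scale1r.
rewrite trmx_tens H // IH; last by move=> p hp; apply: H; exact: ltnW.
by rewrite tensmxZZ signr_addb.
Qed.

Fixpoint prodc (c : nat -> int) n : int :=
  if n is n'.+1 then c n' * prodc c n' else 1.

Lemma tens_scal m (a b : int) :
  tensmx (a%:M : 'M[int]_2) (b%:M : 'M[int]_m) = (a * b)%:M.
Proof.
apply/matrixP => i j.
case: (mxtens_indexP i) => i0 i1; case: (mxtens_indexP j) => j0 j1.
rewrite tensmxE !mxE (can_eq (@mxtens_indexK _ _)) xpair_eqE.
by case: eqP; case: eqP => _ _ /=; rewrite ?mulr1n ?mulr0n ?mulr0 ?mul0r.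
Qed.

Lemma tens_scalar (h : nat -> 'M[int]_2) c n :
  (forall p, (p < n)%N -> h p = (c p)%:M) -> tens h n = (prodc c n)%:M.
Proof.
elim: n => [|n IH] H //=.
rewrite H // IH ?tens_scal //; move=> p hp; apply: H; exact: ltnW.
Qed.

Lemma u01M x y : u01 x -> u01 y -> u01 (x * y).
Proof.
rewrite /u01 => /orP[/orP[]|]/eqP-> /orP[/orP[]|]/eqP->; by vm_compute.
Qed.

Lemma tens_u01 (h : nat -> 'M[int]_2) n :
  (forall p, (p < n)%N -> forall a b, u01 (h p a b)) ->
  forall i j, u01 (tens h n i j).
Proof.
elim: n => [|n IH] H /= i j.
  by rewrite !mxE; case: (i == j); rewrite /u01 ?eqxx ?orbT.
case: (mxtens_indexP i) => i0 i1; case: (mxtens_indexP j) => j0 j1.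
rewrite tensmxE; apply: u01M; first exact: H.
by apply: IH => p hp; apply: H; exact: ltnW.
Qed.

Lemma tens_dis (f g : nat -> 'M[int]_2) n p :
  (p < n)%N -> (forall a b, f p a b * g p a b = 0) ->
  forall i j, tens f n i j * tens g n i j = 0.
Proof.
elim: n => [|n IH] // hp H /= i j.
case: (mxtens_indexP i) => i0 i1; case: (mxtens_indexP j) => j0 j1.
rewrite !tensmxE mulrACA.
case: (ltngtP p n) => [hpn||hpn]; first by rewrite IH // mulr0.
  by move=> hnp; move: hp; rewrite ltnS leqNgt hnp.
by move: H; rewrite hpn => H; rewrite H mul0r.
Qed.



Definition tabA : seq (seq nat) :=
 [:: [:: 0;0;0;4;4;4;4;4;4]; [:: 0;0;2;4;4;4;4;4;7]; [:: 0;2;0;4;4;4;4;7;5];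
     [:: 0;2;2;4;4;4;5;7;6]; [:: 2;0;0;4;4;4;6;7;6]; [:: 2;0;2;4;4;4;7;4;6];
     [:: 2;2;0;4;4;4;7;5;5]; [:: 2;2;2;4;4;5;7;6;5]]%N.
Definition tabB : seq (seq nat) :=
 [:: [:: 0;0;0;4;4;7;7;6;5]; [:: 0;0;2;4;7;6;7;6;5]; [:: 0;2;0;7;5;6;7;6;5];
     [:: 0;2;3;5;4;7;6;7;7]; [:: 2;0;0;7;6;6;7;6;5]; [:: 2;0;3;6;4;7;6;7;7];
     [:: 2;2;1;4;7;7;6;7;7]; [:: 2;2;3;7;7;7;6;7;7]]%N.

Definition ty (tab : seq (seq nat)) (k p : nat) : nat := nth 0%N (nth [::] tab k) p.

Definition Mt tab (k : nat) : 'M[int]_(pw 9) := tens (fun p => T (ty tab k p)) 9.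

Definition sgn t1 t2 (k l : nat) p := odflt false (relt (ty t1 k p) (ty t2 l p)).
Definition pairok t1 t2 k l := all (fun p => relt (ty t1 k p) (ty t2 l p) != None) (iota 0 9).

Lemma pairP t1 t2 k l : pairok t1 t2 k l ->
  (Mt t1 k *m (Mt t2 l)^T)^T = (-1) ^+ par (sgn t1 t2 k l) 9 *: (Mt t1 k *m (Mt t2 l)^T).
Proof.
move=> /allP H; rewrite /Mt tens_mulT; apply: tens_sym => p hp.
have := H p; rewrite mem_iota add0n hp => /(_ isT).
rewrite /sgn; case E: relt => [b|] // _; exact: relP.
Qed.

Definition wt t : int := if (t < 4)%N then 1 else 2.
Definition diagok tab k := all (fun p => diagcheck (ty tab k p) (wt (ty tab k p))) (iota 0 9).

Lemma diagMP tab k : diagok tab k ->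
  Mt tab k *m (Mt tab k)^T = (prodc (fun p => wt (ty tab k p)) 9)%:M.
Proof.
move=> /allP H; rewrite /Mt tens_mulT; apply: tens_scalar => p hp.
apply: diagP; apply: H; by rewrite mem_iota add0n hp.
Qed.

Definition entok tab k := all (fun p => entcheck (ty tab k p)) (iota 0 9).
Lemma entMP tab k : entok tab k -> forall i j, u01 (Mt tab k i j).
Proof.
move=> /allP H; apply: tens_u01 => p hp; apply: entP; apply: H.
by rewrite mem_iota add0n hp.
Qed.

Definition disok tab k l := has (fun p => dischk (ty tab k p) (ty tab l p)) (iota 0 9).
Lemma disMP tab k l : disok tab k l -> forall i j, Mt tab k i j * Mt tab l i j = 0.
Proof.
case/hasP => p; rewrite mem_iota add0n /= => hp hd.
exact: (tens_dis hp (disP hd)).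
Qed.

Definition famok tab :=
  all (fun k => diagok tab k && (prodc (fun p => wt (ty tab k p)) 9 == 64) && entok tab k &&
     all (fun l => (k == l) || [&& pairok tab tab k l, par (sgn tab tab k l) 9 & disok tab k l])
       (iota 0 8)) (iota 0 8).
Definition crossok t1 t2 :=
  all (fun k => all (fun l => pairok t1 t2 k l && ~~ par (sgn t1 t2 k l) 9) (iota 0 8)) (iota 0 8).

Lemma famA : famok tabA. Proof. by vm_compute. Qed.
Lemma famB : famok tabB. Proof. by vm_compute. Qed.
Lemma crossAB : crossok tabA tabB. Proof. by vm_compute. Qed.



Lemma sum_pairs (V : zmodType) (F : nat -> nat -> V) n :
  (forall k l, (k < l)%N -> (l < n)%N -> F k l + F l k = 0) ->
  \sum_(k < n) \sum_(l < n) F k l = \sum_(k < n) F k k.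
Proof.
elim: n => [|n IH] H; first by rewrite !big_ord0.
rewrite big_ord_recr /= [in RHS]big_ord_recr /=.
under eq_bigr => k _ do rewrite big_ord_recr /=.
rewrite big_split /= IH; last by move=> k l hkl hl; apply: H => //; exact: ltnW.
rewrite big_ord_recr /= -!addrA; congr (_ + _).
by rewrite addrA -big_split /= big1 ?add0r // => k _; exact: H.
Qed.

Lemma sum_pairs_ord (V : zmodType) (F : 'I_8 -> 'I_8 -> V) :
  (forall k l, k != l -> F k l + F l k = 0) ->
  \sum_k \sum_l F k l = \sum_k F k k.
Proof.
move=> H.
pose G (k l : nat) := F (inord k) (inord l).
have E1 : \sum_k \sum_l F k l = \sum_(k < 8) \sum_(l < 8) G k l.
  by apply: eq_bigr => k _; apply: eq_bigr => l _; rewrite /G !inord_val.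
have E2 : \sum_k F k k = \sum_(k < 8) G k k.
  by apply: eq_bigr => k _; rewrite /G !inord_val.
rewrite E1 E2 sum_pairs // => k l hkl hl; rewrite /G; apply: H.
by rewrite -val_eqE /= !inordK // ?(ltn_trans hkl) // ltn_eqF.
Qed.

Section Gram.
Variable R : comNzRingType.

Lemma expand N (M P : 'I_8 -> 'M[int]_N) (x y : 'I_8 -> R) :
  (\sum_k x k *: map_mx intr (M k)) *m (\sum_l y l *: map_mx intr (P l))^T =
  \sum_k \sum_l (x k * y l) *: map_mx intr (M k *m (P l)^T).
Proof.
rewrite linear_sum mulmx_suml; apply: eq_bigr => k _.
rewrite mulmx_sumr; apply: eq_bigr => l _.
by rewrite linearZ /= -scalemxAl -scalemxAr scalerA map_mxM map_trmx.
Qed.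

Lemma gram N (M : 'I_8 -> 'M[int]_N) (x : 'I_8 -> R) :
  (forall k, M k *m (M k)^T = 64%:M) ->
  (forall k l, k != l -> M k *m (M l)^T + M l *m (M k)^T = 0) ->
  let X := \sum_k x k *: map_mx intr (M k) in
  X *m X^T = (\sum_(i < 8) (2 ^ 6)%N%:R * x i ^+ 2)%:M.
Proof.
move=> Hd Ho X; rewrite /X expand sum_pairs_ord.
  rewrite [RHS]raddf_sum.
  apply: eq_bigr => k _; rewrite Hd map_scalar_mx /= !scale_scalar_mx expr2.
  by congr (_%:M); rewrite mulrC.
move=> k l hkl; rewrite mulrC -scalerDr -raddfD /=.
by rewrite Ho // map_mx0 scaler0.
Qed.

Lemma cross N (M P : 'I_8 -> 'M[int]_N) (x y : 'I_8 -> R) :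
  (forall k l, M k *m (P l)^T = P l *m (M k)^T) ->
  let X := \sum_k x k *: map_mx intr (M k) in
  let Y := \sum_k y k *: map_mx intr (P k) in
  X *m Y^T = Y *m X^T.
Proof.
move=> H X Y; rewrite /X /Y !expand exchange_big /=.
apply: eq_bigr => k _; apply: eq_bigr => l _.
by rewrite H mulrC.
Qed.
End Gram.



Definition Mq tab (k : 'I_8) : 'M[int]_(2 ^ 9) := Mt tab k.

Definition Cg (M : 'I_8 -> 'M[int]_(2 ^ 9)) : 'M[sentry 8]_(2 ^ 9) :=
  \matrix_(i, j) match [pick k : 'I_8 | M k i j != 0] with
                 | Some k => Some (M k i j == -1, k)
                 | None => None end.

Lemma entry_sc (R : comNzRingType) n (a : R) (M : 'M[int]_n) i j :
  (a *: map_mx intr M) i j = a * (M i j)%:~R.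
Proof. by rewrite !mxE. Qed.

Lemma evC (M : 'I_8 -> 'M[int]_(2 ^ 9)) (R : comNzRingType) (x : 'I_8 -> R) :
  (forall k i j, u01 (M k i j)) ->
  (forall k l, k != l -> forall i j, M k i j * M l i j = 0) ->
  ev_mx x (Cg M) = \sum_k x k *: map_mx intr (M k).
Proof.
move=> forment famdis.
apply/matrixP => i j; rewrite /ev_mx [LHS]mxE summxE [Cg _ _ _]mxE.
under eq_bigr => k _ do rewrite entry_sc.
case: pickP => [k hk | h0].
  rewrite (bigD1 k) //= big1 ?addr0.
    move: hk (forment k i j); rewrite /u01.
    by move/negPf => -> /=; case/orP => /eqP ->; rewrite ?mulr1 ?mulrN1 ?mulN1r ?mul1r.
  move=> l hl.
  have := famdis _ _ hl i j; move/eqP; rewrite mulf_eq0 (negPf hk) orbF => /eqP ->.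
  by rewrite mulr0.
rewrite big1 // => k _.
by move: (h0 k) => /= /negbFE /eqP ->; rewrite mulr0.
Qed.

Lemma in8 (k : 'I_8) : (val k \in iota 0 8).
Proof. by rewrite mem_iota add0n ltn_ord. Qed.

Section Fam.
Variable tab : seq (seq nat).
Hypothesis H : famok tab.

Lemma fam_k (k : 'I_8) : [/\ diagok tab k, prodc (fun p => wt (ty tab k p)) 9 == 64 & entok tab k].
Proof. by have /andP[/andP[/andP[-> ->] ->] _] := allP H _ (in8 k). Qed.

Lemma fam_kl (k l : 'I_8) : k != l -> [&& pairok tab tab k l, par (sgn tab tab k l) 9 & disok tab k l].
Proof.
move=> hkl; have /andP[_ /allP/(_ _ (in8 l))] := allP H _ (in8 k).
by case/orP => // /eqP/val_inj E; rewrite E eqxx in hkl.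
Qed.

Lemma famdiag k : Mq tab k *m (Mq tab k)^T = 64%:M.
Proof. by case: (fam_k k) => hd /eqP hp _; rewrite /Mq diagMP // hp. Qed.

Lemma famoff k l : k != l -> Mq tab k *m (Mq tab l)^T + Mq tab l *m (Mq tab k)^T = 0.
Proof.
move=> /fam_kl /and3P[hp hs _].
have := pairP hp; rewrite hs expr1 scaleN1r trmx_mul trmxK => E.
by rewrite /Mq E addrN.
Qed.

Lemma famdis k l : k != l -> forall i j, Mq tab k i j * Mq tab l i j = 0.
Proof. by move=> /fam_kl /and3P[_ _ hd]; exact: disMP. Qed.

Lemma forment k i j : u01 (Mq tab k i j).
Proof. by case: (fam_k k) => _ _ he; exact: entMP. Qed.

End Fam.

Lemma crossP (k l : 'I_8) : Mq tabA k *m (Mq tabB l)^T = Mq tabB l *m (Mq tabA k)^T.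
Proof.
have /andP[hp hs] := allP (allP crossAB _ (in8 k)) _ (in8 l).
have := pairP hp; rewrite (negPf hs) expr0 scale1r trmx_mul trmxK.
by rewrite /Mq => ->.
Qed.

Local Close Scope ring_scope.

Theorem lemma5p2 :
  exists (C : 'M[sentry 8]_(2 ^ 9)) (D : 'M[sentry 8]_(2 ^ 9)),
    AOD (fun _ => 2 ^ 6) (fun _ => 2 ^ 6) C D.
Proof.
exists (Cg (Mq tabA)), (Cg (Mq tabB)) => R x y Xe Ye.
rewrite /Xe /Ye (evC x (forment famA) (famdis famA)) (evC y (forment famB) (famdis famB)).
split.
- exact: (gram x (famdiag famA) (famoff famA)).
- exact: (gram y (famdiag famB) (famoff famB)).
- exact: (cross x y crossP).
Qed.
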